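(* For integers $n>1$ and $m>1$, $\chi_{ld}(F_m[\overline{K_{n}}])=3$.
   Context: All graphs are finite, simple and undirected. For a graph $G=(V,E)$ of order $N$ without isolated vertices, a bijection $f\colon V\to\{1,2,\dots,N\}$ is a local distance antimagic labeling if $w(u)\neq w(v)$ for every edge $uv$, where $w(u)=\sum_{x\in N(u)}f(x)$ and $N(u)$ is the open neighborhood of $u$. $\chi_{ld}(G)$ is the minimum number of distinct weights over all local distance antimagic labelings of $G$. The friendship graph $F_m=mK_2+K_1$ consists of $m$ disjoint edges together with a central vertex adjacent to all $2m$ of their endpoints. $\overline{K_n}$ is the edgeless graph on $n$ vertices. The lexicographic product $G[H]$ has vertex set $V(G)\times V(H)$, with $(g,h)$ adjacent to $(g',h')$ iff $gg'\in E(G)$, or $g=g'$ and $hh'\in E(H)$. *)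

(* Defs.v *)
From mathcomp Require Import all_boot.
Set Implicit Arguments. Unset Strict Implicit. Unset Printing Implicit Defensive.

(* A simple graph on a finite vertex type T is a symmetric irreflexive rel. *)

Definition ld_weight (T : finType) (e : rel T) (f : T -> nat) (u : T) : nat :=
  \sum_(x : T | e u x) f x.

Definition is_labeling (T : finType) (f : T -> nat) : Prop :=
  injective f /\ (forall x, 1 <= f x <= #|T|).

Definition is_ld_antimagic (T : finType) (e : rel T) (f : T -> nat) : Prop :=
  is_labeling f /\ (forall u v, e u v -> ld_weight e f u != ld_weight e f v).

Definition num_weights (T : finType) (e : rel T) (f : T -> nat) : nat :=
  size (undup [seq ld_weight e f u | u <- enum T]).

Definition chi_ld_is (T : finType) (e : rel T) (k : nat) : Prop :=
  (exists f, is_ld_antimagic e f /\ num_weights e f = k) /\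
  (forall f, is_ld_antimagic e f -> k <= num_weights e f).

(* Friendship graph F_m = m K_2 + K_1: vertex None is the centre,
   Some (i, b) is endpoint b of the i-th edge. *)
Definition friendship_rel (m : nat) : rel (option ('I_m * bool)) :=
  fun x y => match x, y with
  | None, None => false
  | None, Some _ | Some _, None => true
  | Some (i, b), Some (j, c) => (i == j) && (b != c)
  end.

Definition edgeless_rel (n : nat) : rel 'I_n := fun _ _ => false.

Definition lex_rel (TG TH : finType) (eG : rel TG) (eH : rel TH) : rel (TG * TH) :=
  fun x y => eG x.1 y.1 || ((x.1 == y.1) && eH x.2 y.2).

Arguments friendship_rel m : clear implicits.
Arguments edgeless_rel n : clear implicits.

(* Main.v *)
Require Import Defs.
From mathcomp Require Import all_boot zify.
Set Implicit Arguments. Unset Strict Implicit.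

Definition colf m (g : option ('I_m * bool)) : nat :=
  match g with None => 2*m | Some (i, b) => if b then m + i else i end.
Definition shf m c := if c < m then c + m else if c < 2*m then c - m else 2*m.
Definition t2f m c := if c < m then c + m + 1 else c - m.
Definition t3f m c := if c < m then 2*m - 1 - 2*c else 4*m - 2*c.
Definition altf m j c := if odd j then 2*m - c else c.
Definition pf n m j c :=
  if j == 0 then shf m c
  else if odd n && (j == 1) then t2f m c
  else if odd n && (j == 2) then t3f m c
  else altf m j c.
Definition lab n m (u : option ('I_m * bool) * 'I_n) : nat :=
  u.2 * (2*m+1) + pf n m u.2 (colf u.1) + 1.

Lemma pf_le n m j c : c <= 2*m -> pf n m j c <= 2*m.
Proof.
move=> hc; rewrite /pf /shf /t2f /t3f /altf.
by repeat case: ifP => ? ; try lia.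
Qed.

Lemma pf_inj n m j c c' : c <= 2*m -> c' <= 2*m -> pf n m j c = pf n m j c' -> c = c'.
Proof.
move=> hc hc'; rewrite /pf /shf /t2f /t3f /altf.
by repeat case: ifP => ? ; try lia.
Qed.

Lemma colf_le m g : colf (m:=m) g <= 2*m.
Proof. case: g => [[i b]|] /=; last lia. have := ltn_ord i; case: b; lia. Qed.

Lemma colf_inj m : injective (@colf m).
Proof.
move=> [[i b]|] [[i' b']|] //=.
- have := ltn_ord i; have := ltn_ord i'.
  case: b; case: b' => h1 h2 h; try lia;
  by have -> : i = i' by apply: val_inj => /=; lia.
- have := ltn_ord i; case: b; lia.
- have := ltn_ord i'; case: b'; lia.
Qed.

Lemma sum_alt m s k c : c <= 2*m ->
  \sum_(s <= j < s + 2*k) altf m j c = k * (2*m).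
Proof.
move=> hc; elim: k => [|k IH]; first by rewrite addn0 big_geq.
have -> : s + 2 * k.+1 = (s + 2*k).+2 by lia.
rewrite big_nat_recr /=; last lia.
rewrite big_nat_recr /=; last lia.
rewrite IH /altf /=. case: (odd (s + 2*k)) => /=; lia.
Qed.

Lemma sumP n m c : 1 < n -> c <= 2*m ->
  \sum_(0 <= j < n) pf n m j c + c = n * m + shf m c.
Proof.
move=> hn hc.
have hd := odd_double_half n.
case ho: (odd n) hd => /= hd.
- set k := n./2 - 1.
  have hn' : n = 3 + 2 * k.
    rewrite /k. move: hd hn. rewrite -muln2; move: (n./2) => h; lia.
  rewrite hn' (big_cat_nat _ (n:=3)) //=; try lia.
  rewrite (@eq_big_nat _ _ _ 3 _ _ (fun j => altf m j c)); last first.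
    move=> j /andP [h1 h2]; rewrite /pf -hn' ho /=.
    have -> : (j == 0) = false by apply/negbTE/eqP; lia.
    have -> : (j == 1) = false by apply/negbTE/eqP; lia.
    have -> : (j == 2) = false by apply/negbTE/eqP; lia.
    done.
  rewrite sum_alt //.
  rewrite !big_nat_recr //= big_geq // /pf -hn' ho /= /shf /t2f /t3f.
  by repeat case: ifP => ?; lia.
- set k := n./2 - 1.
  have hn' : n = 2 + 2 * k.
    rewrite /k. move: hd hn. rewrite -muln2; move: (n./2) => h; lia.
  rewrite hn' (big_cat_nat _ (n:=2)) //=; try lia.
  rewrite (@eq_big_nat _ _ _ 2 _ _ (fun j => altf m j c)); last first.
    move=> j /andP [h1 h2]; rewrite /pf -hn' ho /=.
    have -> : (j == 0) = false by apply/negbTE/eqP; lia.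
    done.
  rewrite sum_alt //.
  rewrite !big_nat_recr //= big_geq // /pf -hn' ho /= /shf /altf /=.
  by repeat case: ifP => ?; lia.
Qed.

Lemma lab_inj n m : injective (@lab n m).
Proof.
move=> [g j] [g' j']; rewrite /lab /= => h.
have hp := pf_le n j (colf_le g).
have hp' := pf_le n j' (colf_le g').
have ej : (j : nat) = j' by nia.
have ej' : j = j' by apply: val_inj.
subst j'.
have : pf n m j (colf g) = pf n m j (colf g') by lia.
by move/(pf_inj (colf_le g) (colf_le g'))/colf_inj ->.
Qed.

Lemma lab_range n m u : 1 <= @lab n m u <= (2*m+1) * n.
Proof.
case: u => g j; rewrite /lab /=.
have hp := pf_le n j (colf_le g).
have hj := ltn_ord j.
apply/andP; split; first lia.
nia.
Qed.

Lemma Lsum n m g : \sum_(j < n) @lab n m (g, j) =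
  \sum_(j < n) (j * (2*m+1) + 1) + \sum_(0 <= j < n) pf n m j (colf g).
Proof.
rewrite big_mkord -big_split; apply: eq_bigr => j _ /=; rewrite /lab /=; lia.
Qed.

Lemma weight_lex (TG : finType) (eG : rel TG) n (f : TG * 'I_n -> nat) g j :
  ld_weight (lex_rel eG (edgeless_rel n)) f (g, j) =
  \sum_(g' | eG g g') \sum_(j' < n) f (g', j').
Proof.
rewrite /ld_weight pair_big /=; apply: eq_big => [[x y]|[x y]] //=.
by rewrite /lex_rel /edgeless_rel andbF orbF andbT.
Qed.

Lemma leaf_sum m i b (F : option ('I_m * bool) -> nat) :
  \sum_(g' | friendship_rel m (Some (i, b)) g') F g' = F None + F (Some (i, ~~ b)).
Proof.
rewrite (bigD1 None) //=; congr (_ + _).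
apply: big_pred1 => [[[j c]|]] //=.
rewrite andbT; apply/idP/idP => [/andP [/eqP -> h]|/eqP [-> ->]]; last by rewrite eqxx; case: b.
  by apply/eqP; congr (Some (_, _)); move: h; case: b; case: c.
Qed.

Lemma center_sum m (x0 : 'I_m * bool) (F : option ('I_m * bool) -> nat) :
  \sum_(g' | friendship_rel m None g') F g' =
  \sum_(i < m) (F (Some (i, true)) + F (Some (i, false))).
Proof.
rewrite (reindex_onto Some (fun g => odflt x0 g)); last by case.
rewrite /= (eq_bigl xpredT) //.
transitivity (\sum_(i : 'I_m) \sum_(c : bool) F (Some (i, c))); last first.
  by apply: eq_bigr => i _; rewrite big_bool.
rewrite pair_big /=; apply: eq_big => [[i c]|[i c]] //.
by move=> p; rewrite /= eqxx.
Qed.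

Theorem mainTheorem20 (n m : nat) (hn : 1 < n) (hm : 1 < m) :
  chi_ld_is (lex_rel (friendship_rel m) (edgeless_rel n)) 3.
Proof.
have hm0 : 0 < m by lia.
have hn0 : 0 < n by lia.
set i0 : 'I_m := Ordinal hm0.
set j0 : 'I_n := Ordinal hn0.
split; last first.
  move=> f [_ hf].
  pose w := ld_weight (lex_rel (friendship_rel m) (edgeless_rel n)) f.
  set u0 := (None, j0) : option ('I_m * bool) * 'I_n.
  set u1 := (Some (i0, false), j0) : option ('I_m * bool) * 'I_n.
  set u2 := (Some (i0, true), j0) : option ('I_m * bool) * 'I_n.
  have h01 := hf u0 u1 isT.
  have h02 := hf u0 u2 isT.
  have h12 : w u1 != w u2.
    by apply: hf; rewrite /lex_rel /= ?eqxx.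
  rewrite /num_weights; apply: (@uniq_leq_size _ [:: w u0; w u1; w u2]).
    by rewrite /= !inE negb_or h01 h02 h12.
  move=> x; rewrite !inE mem_undup => /or3P [] /eqP ->; apply: map_f; by rewrite mem_enum.
set R := \sum_(j < n) (j * (2*m+1) + 1).
set X := R + n * m.
have hX : 2 * m <= X by rewrite /X; nia.
have LF : forall i, \sum_(j < n) @lab n m (Some (i, false), j) = X + m.
  move=> i; rewrite Lsum -/R /=; have hi := ltn_ord i.
  have := @sumP n m i hn (ltac:(lia)); rewrite /shf /X.
  by repeat case: ifP => ?; lia.
have LT : forall i, \sum_(j < n) @lab n m (Some (i, true), j) = X - m.
  move=> i; rewrite Lsum -/R /=; have hi := ltn_ord i.
  have := @sumP n m (m + i) hn (ltac:(lia)); rewrite /shf /X.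
  by repeat case: ifP => ?; lia.
have LN : \sum_(j < n) @lab n m (None, j) = X.
  rewrite Lsum -/R /=.
  have := @sumP n m (2 * m) hn (ltac:(lia)); rewrite /shf /X.
  by repeat case: ifP => ?; lia.
have W : forall u, ld_weight (lex_rel (friendship_rel m) (edgeless_rel n)) (@lab n m) u =
   match u.1 with None => m * (2 * X) | Some (_, b) => if b then X + X + m else X + (X - m) end.
  move=> [[[i b]|] j]; rewrite weight_lex /=.
    rewrite leaf_sum LN; case: b => /=; [rewrite LF | rewrite LT]; lia.
  rewrite (center_sum (i0, false)).
  rewrite (eq_bigr (fun _ => 2 * X)); last by move=> i _; rewrite LT LF; lia.
  by rewrite sum_nat_const card_ord.
exists (@lab n m); split; last first.
  rewrite /num_weights.
  set s := undup _.
  have hp : perm_eq s [:: m * (2 * X); X + X + m; X + (X - m)].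
    apply: uniq_perm; first exact: undup_uniq.
      rewrite /= !inE !negb_or andbT; apply/andP; split; [apply/andP; split|]; apply/eqP; nia.
    move=> x; rewrite /s mem_undup !inE; apply/mapP/idP.
      by move=> [u _ ->]; rewrite W; case: u => [[[i [|]]|] j] /=; rewrite eqxx ?orbT.
    move=> /or3P [] /eqP ->.
    - by exists (None, j0); rewrite ?mem_enum ?W.
    - by exists (Some (i0, true), j0); rewrite ?mem_enum ?W.
    - by exists (Some (i0, false), j0); rewrite ?mem_enum ?W.
  by rewrite (perm_size hp).
split.
  split; first exact: lab_inj.
  move=> u; rewrite card_prod card_option card_prod !card_ord card_bool.
  have := lab_range u; lia.
move=> [g j] [g' j']; rewrite !W /= /lex_rel /edgeless_rel andbF orbF /=.
case: g => [[i b]|]; case: g' => [[i' b']|] //=; try (case: b); try (case: b'); 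
  move=> H; apply/eqP; nia.
Qed.
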